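(* Let $(f,\bar{f})\colon (G,P_G)\to (H,P_H)$ be a regular epimorphism in $\mathsf{PreOrdGrp}$ (i.e. both $f\colon G\to H$ and $\bar f\colon P_G\to P_H$ are surjective). The following conditions are equivalent: (1) (i) $\mathsf{Ker}(f)\subseteq Z(G)$ (the center of $G$), and (ii) for all $a,b,c\in P_G$ with $\eta_G(a)=\eta_G(b)$ and $f(b)=f(c)$, one has $a-b+c\in P_G$; (2) $(f,\bar f)$ is a $\Gamma_C$-normal extension.
   Context: A preordered group is a pair $(G,P_G)$ where $G$ is a group (written additively, not necessarily abelian) and $P_G\subseteq G$ is a submonoid closed under conjugation in $G$ (the positive cone). A morphism $(f,\bar f)\colon (G,P_G)\to(H,P_H)$ is a group homomorphism $f\colon G\to H$ with $f(P_G)\subseteq P_H$, $\bar f$ being its restriction $P_G\to P_H$. This gives the category $\mathsf{PreOrdGrp}$; $\mathsf{PreOrdAb}$ is its full subcategory of those $(G,P_G)$ with $G$ abelian. Limits in $\mathsf{PreOrdGrp}$ are computed componentwise (e.g. the pullback of $(f,\bar f)$ and $(g,\bar g)$ is the pair of the group pullback and the monoid pullback of the positive cones), and the regular (= normal = effective descent) epimorphisms are exactly the morphisms $(f,\bar f)$ with both $f$ and $\bar f$ surjective. For a group $G$, $\eta_G\colon G\to G/[G,G]$ is the abelianization quotient. The functor $C\colon\mathsf{PreOrdGrp}\to\mathsf{PreOrdAb}$, $C(G,P_G)=(G/[G,G],\eta_G(P_G))$, is left adjoint to the inclusion $V$, with unit $(\eta_G,\bar\eta_G)$, $\bar\eta_G\colon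 P_G\to\eta_G(P_G)$ the restriction. A morphism $(f,\bar f)\colon X\to Y$ which is a regular epimorphism is a $\Gamma_C$-trivial extension if the naturality square formed by $(f,\bar f)$, the units $X\to VC(X)$, $Y\to VC(Y)$ and $VC(f,\bar f)$ is a pullback in $\mathsf{PreOrdGrp}$. A regular epimorphism $(f,\bar f)$ is a $\Gamma_C$-normal extension if the first projection of its kernel pair $(\pi_1,\bar\pi_1)\colon (Eq(f),Eq(\bar f))\to (G,P_G)$ is a $\Gamma_C$-trivial extension, where $Eq(f)=\{(x,y)\in G\times G: f(x)=f(y)\}$ and $Eq(\bar f)=Eq(f)\cap(P_G\times P_G)$. *)

(* Defs.v *)
From Stdlib Require Import ClassicalEpsilon ProofIrrelevance.

Set Implicit Arguments.
Unset Strict Implicit.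

Record Group := {
  gcar :> Type;
  gadd : gcar -> gcar -> gcar;
  gzero : gcar;
  gopp : gcar -> gcar;
  gaddA : forall x y z, gadd x (gadd y z) = gadd (gadd x y) z;
  gadd0x : forall x, gadd gzero x = x;
  gaddx0 : forall x, gadd x gzero = x;
  gaddNx : forall x, gadd (gopp x) x = gzero;
  gaddxN : forall x, gadd x (gopp x) = gzero
}.
Arguments gzero : clear implicits.

Declare Scope grp_scope.
Delimit Scope grp_scope with grp.
Notation "x + y" := (@gadd _ x y) : grp_scope.
Notation "- x" := (@gopp _ x) : grp_scope.
Notation "x - y" := (@gadd _ x (@gopp _ y)) : grp_scope.
Open Scope grp_scope.

Record hom (G H : Group) := {
  hfun :> G -> H;
  hmorph : forall x y, hfun (x + y) = hfun x + hfun y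
}.

Lemma gcancel_r (G : Group) (a b c : G) : a + c = b + c -> a = b.
Proof.
  intro E. rewrite <- (gaddx0 a), <- (gaddx0 b), <- (gaddxN c), !gaddA, E.
  reflexivity.
Qed.

Lemma hom0 (G H : Group) (f : hom G H) : f (gzero G) = gzero H.
Proof.
  apply (gcancel_r (c := f (gzero G))). rewrite <- hmorph, gadd0x, gadd0x.
  reflexivity.
Qed.

Lemma homN (G H : Group) (f : hom G H) (x : G) : f (- x) = - f x.
Proof.
  apply (gcancel_r (c := f x)). rewrite <- hmorph, gaddNx, gaddNx, hom0.
  reflexivity.
Qed.

(* Preordered groups: positive cone = submonoid closed under conjugation *)

Record PreOrdGroup := {
  pgrp :> Group;
  cone : pgrp -> Prop;
  cone0 : cone (gzero pgrp);
  coneD : forall x y, cone x -> cone y -> cone (x + y);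
  coneJ : forall g x, cone x -> cone (g + x - g)
}.
Arguments cone : clear implicits.

(* morphisms of PreOrdGrp: group homomorphisms mapping P_G into P_H;
   the restriction \bar f is implicit (it is f on the cone) *)
Record pmor (X Y : PreOrdGroup) := {
  pm :> hom X Y;
  pm_cone : forall x, cone X x -> cone Y (pm x)
}.

Definition regular_epi (X Y : PreOrdGroup) (f : pmor X Y) : Prop :=
  (forall y : Y, exists x : X, f x = y) /\
  (forall y : Y, cone Y y -> exists x : X, cone X x /\ f x = y).

Definition in_center (G : Group) (z : G) : Prop := forall g : G, g + z = z + g.
Definition in_ker (G H : Group) (f : hom G H) (x : G) : Prop := f x = gzero H.

Definition is_subgroup (G : Group) (S : G -> Prop) : Prop :=
  S (gzero G) /\ (forall x y, S x -> S y -> S (x + y)) /\ (forall x, S x -> S (- x)).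

Definition commutator (G : Group) (a b : G) : G := a + b - a - b.

Definition in_comm_sub (G : Group) (x : G) : Prop :=
  forall S : G -> Prop, is_subgroup S -> (forall a b, S (commutator a b)) -> S x.

Definition ab_class (G : Group) (x : G) : G -> Prop := fun y => in_comm_sub (x - y).

(* underlying set of G/[G,G]: the set of cosets *)
Definition ab_car (G : Group) : Type := { S : G -> Prop | exists x : G, S = ab_class x }.

Definition eta (G : Group) (x : G) : ab_car G :=
  exist (fun S => exists x : G, S = ab_class x) (ab_class x) (ex_intro _ x eq_refl).

Arguments eta : clear implicits.

Definition ab_rep (G : Group) (s : ab_car G) : G :=
  proj1_sig (constructive_indefinite_description _ (proj2_sig s)).

Definition ab_map (G H : Group) (f : hom G H) (s : ab_car G) : ab_car H :=
  eta H (f (ab_rep s)).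

Definition ab_cone (X : PreOrdGroup) (s : ab_car X) : Prop :=
  exists x : X, cone X x /\ eta X x = s.

(* Pullback squares in PreOrdGrp (computed componentwise):             *)
(*        A --p--> B                                                   *)
(*        |u       |v                                                  *)
(*        C --q--> D                                                   *)
(* is a pullback iff it commutes, the group part is a pullback of sets *)
(* (canonical comparison map bijective) and the cone part is a         *)
(* pullback of the positive cones.                                     *)

Definition is_pullback (A B C D : Type)
  (PA : A -> Prop) (PB : B -> Prop) (PC : C -> Prop)
  (p : A -> B) (u : A -> C) (v : B -> D) (q : C -> D) : Prop :=
  (forall a, v (p a) = q (u a)) /\
  (forall b c, v b = q c -> exists a, (p a = b /\ u a = c) /\
                              forall a', p a' = b /\ u a' = c -> a' = a) /\
  (forall b c, PB b -> PC c -> v b = q c -> exists a, PA a /\ p a = b /\ u a = c).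

Definition trivial_ext (X Y : PreOrdGroup) (f : pmor X Y) : Prop :=
  regular_epi f /\
  is_pullback (cone X) (cone Y) (@ab_cone X)
    f (@eta X) (@eta Y) (ab_map f).

Lemma sig_eq (A : Type) (P : A -> Prop) (x y : sig P) :
  proj1_sig x = proj1_sig y -> x = y.
Proof.
  destruct x as [x Hx], y as [y Hy]; simpl; intro E; subst y.
  f_equal; apply proof_irrelevance.
Qed.

Section KernelPair.
Variables (X Y : PreOrdGroup) (f : pmor X Y).

Definition kp_car : Type := { p : X * X | f (fst p) = f (snd p) }.

Definition kp_add (p q : kp_car) : kp_car.
Proof.
  refine (exist _ (fst (proj1_sig p) + fst (proj1_sig q),
                   snd (proj1_sig p) + snd (proj1_sig q)) _).
  simpl. rewrite !hmorph, (proj2_sig p), (proj2_sig q). reflexivity.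
Defined.

Definition kp_zero : kp_car := exist _ (gzero X, gzero X) eq_refl.

Definition kp_opp (p : kp_car) : kp_car.
Proof.
  refine (exist _ (- fst (proj1_sig p), - snd (proj1_sig p)) _).
  simpl. rewrite !homN, (proj2_sig p). reflexivity.
Defined.

Definition kp_group : Group.
Proof.
  refine (@Build_Group kp_car kp_add kp_zero kp_opp _ _ _ _ _);
  intros; apply sig_eq; simpl;
  repeat match goal with p : kp_car |- _ => destruct p as [[? ?] ?] end; simpl;
  f_equal; auto using gaddA, gadd0x, gaddx0, gaddNx, gaddxN.
Defined.

Definition kp_cone (p : kp_group) : Prop :=
  cone X (fst (proj1_sig p)) /\ cone X (snd (proj1_sig p)).

Definition kernel_pair : PreOrdGroup.
Proof.
  refine (@Build_PreOrdGroup kp_group kp_cone _ _ _).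
  - split; apply cone0.
  - intros [[a b] ?] [[c d] ?] [H1 H2] [H3 H4]; split; simpl in *; apply coneD; auto.
  - intros [[g h] ?] [[a b] ?] [H1 H2]; split; simpl in *; apply coneJ; auto.
Defined.

Definition kp_proj1_hom : hom kernel_pair X.
Proof.
  refine (@Build_hom kernel_pair X (fun p : kp_car => fst (proj1_sig p)) _).
  intros; reflexivity.
Defined.

Definition kp_proj1 : pmor kernel_pair X.
Proof.
  refine (@Build_pmor kernel_pair X kp_proj1_hom _).
  intros p [H1 _]; exact H1.
Defined.

End KernelPair.

Definition normal_ext (X Y : PreOrdGroup) (f : pmor X Y) : Prop :=
  regular_epi f /\ trivial_ext (kp_proj1 f).

(* Main.v *)
Require Import Defs.
From Stdlib Require Import FunctionalExtensionality PropExtensionality ClassicalEpsilon.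
Set Implicit Arguments.
Unset Strict Implicit.

Section GL.
Context {G : Group}.
Implicit Types a b c : G.
Lemma addKx a b : - a + (a + b) = b.
Proof. rewrite gaddA, gaddNx, gadd0x; reflexivity. Qed.
Lemma addxNK a b : (a + - b) + b = a.
Proof. rewrite <- gaddA, gaddNx, gaddx0; reflexivity. Qed.
Lemma addxKN a b : (a + b) + - b = a.
Proof. rewrite <- gaddA, gaddxN, gaddx0; reflexivity. Qed.
Lemma opp0 : - gzero G = gzero G.
Proof. rewrite <- (gadd0x (- gzero G)), gaddxN; reflexivity. Qed.
Lemma oppD a b : - (a + b) = - b + - a.
Proof.
  apply (gcancel_r (c := a + b)). rewrite gaddNx.
  rewrite <- gaddA, addKx, gaddNx; reflexivity.
Qed.
Lemma subr_eq0 a b : a + - b = gzero G -> a = b.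
Proof. intro E. rewrite <- (addxNK a b), E, gadd0x; reflexivity. Qed.

Lemma ics_sub : is_subgroup (@in_comm_sub G).
Proof.
  split; [|split].
  - intros S [H0 _] _; exact H0.
  - intros x y Hx Hy S HS Hc. pose proof HS as [_ [HD _]]. apply HD; [apply Hx|apply Hy]; assumption.
  - intros x Hx S HS Hc. pose proof HS as [_ [_ HN]]. apply HN, Hx; assumption.
Qed.
End GL.

Lemma ics_0 (G : Group) : in_comm_sub (gzero G).
Proof. destruct (@ics_sub G) as [H _]; exact H. Qed.
Lemma ics_D (G : Group) (x y : G) : in_comm_sub x -> in_comm_sub y -> in_comm_sub (x + y).
Proof. destruct (@ics_sub G) as [_ [H _]]; apply H. Qed.
Lemma ics_N (G : Group) (x : G) : in_comm_sub x -> in_comm_sub (- x).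
Proof. destruct (@ics_sub G) as [_ [_ H]]; apply H. Qed.
Lemma ics_comm (G : Group) (a b : G) : in_comm_sub (commutator a b).
Proof. intros S _ Hc; apply Hc. Qed.

Lemma ics_addl (G : Group) (p q : G) : in_comm_sub p -> (in_comm_sub (p + q) <-> in_comm_sub q).
Proof.
  intro Hp; split; intro H.
  - rewrite <- (addKx p q). apply ics_D; [apply ics_N|]; assumption.
  - apply ics_D; assumption.
Qed.

Lemma eta_eq (G : Group) (x y : G) : eta G x = eta G y <-> in_comm_sub (x - y).
Proof.
  split.
  - intro E. apply (f_equal (@proj1_sig _ _)) in E. simpl in E.
    assert (H : ab_class y y) by (unfold ab_class; rewrite gaddxN; apply ics_0).
    rewrite <- E in H; exact H.
  - intro H. apply sig_eq; simpl. apply functional_extensionality; intro z.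
    apply propositional_extensionality. unfold ab_class.
    assert (Ez : x - z = (x - y) + (y - z)).
    { rewrite gaddA, addxNK; reflexivity. }
    rewrite Ez. apply ics_addl; exact H.
Qed.

Lemma hom_ics (G H : Group) (h : hom G H) (z : G) : in_comm_sub z -> in_comm_sub (h z).
Proof.
  intro Hz. apply (Hz (fun z => in_comm_sub (h z))).
  - split; [|split].
    + rewrite hom0; apply ics_0.
    + intros x y Hx Hy; rewrite hmorph; apply ics_D; assumption.
    + intros x Hx; rewrite homN; apply ics_N; assumption.
  - intros a b. unfold commutator. rewrite !hmorph, !homN. apply (@ics_comm H (h a) (h b)).
Qed.

Lemma ab_rep_eta (G : Group) (s : ab_car G) : eta G (ab_rep s) = s.
Proof.
  unfold ab_rep. destruct (constructive_indefinite_description _ _) as [x Hx]; simpl.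
  apply sig_eq; simpl; symmetry; exact Hx.
Qed.

Lemma ab_map_eta (G H : Group) (h : hom G H) (a : G) : ab_map h (eta G a) = eta H (h a).
Proof.
  unfold ab_map. apply eta_eq.
  assert (E := ab_rep_eta (eta G a)). apply eta_eq in E.
  apply hom_ics with (h := h) in E. rewrite hmorph, homN in E. exact E.
Qed.

Section KP.
Variables (X Y : PreOrdGroup) (f : pmor X Y).

Definition diagf (x : X) : kernel_pair f := exist _ (x, x) eq_refl.
Definition diag_hom : hom X (kernel_pair f).
Proof. refine (@Build_hom X (kernel_pair f) diagf _). intros; apply sig_eq; reflexivity. Defined.

Definition psi (a : kernel_pair f) : X := - fst (proj1_sig a) + snd (proj1_sig a).

Hypothesis Hcent : forall k : X, in_ker f k -> in_center k.

Lemma psi_ker a : in_ker f (psi a).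
Proof.
  destruct a as [[x y] E]; unfold in_ker, psi; simpl in *.
  rewrite hmorph, homN, E, gaddNx; reflexivity.
Qed.

Lemma psi_add a b : psi (a + b) = psi a + psi b.
Proof.
  unfold psi; cbn.
  destruct a as [[x1 y1] E1], b as [[x2 y2] E2]; simpl.
  assert (C := Hcent (psi_ker (exist _ (x1, y1) E1))). unfold psi in C; simpl in C.
  rewrite oppD, <- !gaddA, (gaddA (-x1) y1 (-x2 + y2)), (gaddA (-x1 + y1) (-x2) y2), <- (C (-x2)), <- !gaddA; reflexivity.
Qed.

Lemma psi_zero : psi (gzero _) = gzero X.
Proof. unfold psi; simpl. rewrite gaddNx; reflexivity. Qed.

Lemma psi_opp a : psi (- a) = - psi a.
Proof.
  apply (gcancel_r (c := psi a)). rewrite <- psi_add, gaddNx, gaddNx. apply psi_zero.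
Qed.

Lemma diag_lemma (a : kernel_pair f) : in_comm_sub a -> fst (proj1_sig a) = snd (proj1_sig a).
Proof.
  intro H.
  assert (P : psi a = gzero X).
  { apply (H (fun a => psi a = gzero X)).
    - split; [|split].
      + apply psi_zero.
      + intros x y Hx Hy; rewrite psi_add, Hx, Hy, gadd0x; reflexivity.
      + intros x Hx; rewrite psi_opp, Hx; apply opp0.
    - intros u v. unfold commutator. rewrite !psi_add, !psi_opp.
      rewrite <- (Hcent (psi_ker u) (psi v)). rewrite addxKN, gaddxN; reflexivity. }
  unfold psi in P. symmetry. rewrite <- (addKx (fst (proj1_sig a)) (snd (proj1_sig a))) in P.
  rewrite <- (gaddx0 (fst (proj1_sig a))). rewrite <- P.
  rewrite gaddA, gaddxN, gadd0x. rewrite addKx. reflexivity.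
Qed.

Lemma uniq_lift (a a' : kernel_pair f) : eta _ a = eta _ a' ->
  fst (proj1_sig a) = fst (proj1_sig a') -> a = a'.
Proof.
  intros E F. apply eta_eq in E. apply diag_lemma in E. cbn in E.
  rewrite F, gaddxN in E. symmetry in E; apply subr_eq0 in E.
  destruct a as [[x y] ?], a' as [[x' y'] ?]; apply sig_eq; simpl in *. congruence.
Qed.

Lemma lift (c0 : kernel_pair f) (b : X) : in_comm_sub (b - fst (proj1_sig c0)) ->
  fst (proj1_sig (diagf (b - fst (proj1_sig c0)) + c0)) = b /\
  eta _ (diagf (b - fst (proj1_sig c0)) + c0) = eta _ c0.
Proof.
  intro H. split.
  - cbn. apply addxNK.
  - apply eta_eq. rewrite addxKN. apply (hom_ics diag_hom). exact H.
Qed.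
End KP.

Theorem theorem2p9 (X Y : PreOrdGroup) (f : pmor X Y) (Hf : regular_epi f) :
  ((forall k : X, in_ker f k -> in_center k) /\
   (forall a b c : X, cone X a -> cone X b -> cone X c ->
      eta X a = eta X b -> f b = f c -> cone X (a - b + c)))
  <-> normal_ext f.
Proof.
  split.
  - intros [Hc Hii]. split; [exact Hf|]. split.
    + split.
      * intro y. exists (diagf f y). reflexivity.
      * intros y Hy. exists (diagf f y). split; [split; exact Hy|reflexivity].
    + split; [|split].
      * intro a. symmetry. apply (ab_map_eta (kp_proj1 f) a).
      * intros b c E. rewrite <- (ab_rep_eta c) in E |- *. set (c0 := ab_rep c) in *.
        rewrite (ab_map_eta (kp_proj1 f) c0) in E. apply eta_eq in E.
        destruct (@lift _ _ f _ _ E) as [L1 L2].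
        eexists; split; [split; [exact L1|exact L2]|].
        intros a' [A1 A2]. apply (uniq_lift Hc). 
        -- rewrite A2; symmetry; exact L2.
        -- cbn in A1 |- *. rewrite A1. symmetry; exact L1.
      * intros b c Hb [w [[Hw1 Hw2] Ew]] E. subst c.
        rewrite (ab_map_eta (kp_proj1 f) w) in E.
        assert (E' := E). apply eta_eq in E.
        destruct (@lift _ _ f _ _ E) as [L1 L2].
        eexists; split; [|split; [exact L1|exact L2]].
        split; cbn.
        -- cbn in L1. rewrite L1. exact Hb.
        -- destruct w as [[x y] Exy]; cbn in *. apply Hii; auto.
  - intros [_ [_ [Hcomm [Hgrp Hcone]]]].
    assert (Hi : forall k : X, in_ker f k -> in_center k).
    { intros k Hk g.
      assert (Pu : f (fst (gzero X, k)) = f (snd (gzero X, k))).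
      { simpl. rewrite hom0. symmetry; exact Hk. }
      set (u := exist _ (gzero X, k) Pu : kernel_pair f).
      set (a := commutator u (diagf f g)).
      assert (E0 : eta X (gzero X) = ab_map (kp_proj1 f) (eta _ (gzero (kernel_pair f)))).
      { apply (Hcomm (gzero (kernel_pair f))). }
      destruct (Hgrp _ _ E0) as [a0 [[A1 A2] U]].
      assert (Ea : a = a0).
      { apply U. split.
        - cbn. rewrite opp0, gaddx0, gadd0x, gaddxN; reflexivity.
        - apply eta_eq. rewrite opp0, gaddx0. apply ics_comm. }
      assert (Ez : gzero _ = a0) by (apply U; split; reflexivity).
      rewrite <- Ez in Ea. apply (f_equal (fun p : kernel_pair f => snd (proj1_sig p))) in Ea.
      cbn in Ea. apply subr_eq0 in Ea. rewrite <- Ea at 1. apply addxNK. }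
    split; [exact Hi|].
    intros a b c Ha Hb Hc Eab Fbc.
    set (w := exist _ (b, c) Fbc : kernel_pair f).
    assert (Ew : eta X a = ab_map (kp_proj1 f) (eta _ w)).
    { rewrite <- (Hcomm w). exact Eab. }
    destruct (Hcone a (eta _ w) Ha (ex_intro _ w (conj (conj Hb Hc) eq_refl)) Ew)
      as [a' [[_ Hy] [A1 A2]]].
    apply eta_eq, (diag_lemma Hi) in A2.
    destruct a' as [[x y] Exy]; cbn in *. subst x.
    rewrite A2, addxNK; exact Hy.
Qed.
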